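(* If $n>0$ then $v_{2l-1}=v_{2l}=l$ for all $l=1,\dots,n$.
   Context: $k$ is a field of characteristic zero, $\mathcal O_n=k[x]/(x^{n+1})$, elements of $\mathcal O_n$ identified with multiplication operators, $\operatorname{ad}_x(\delta)=x\delta-\delta x$. The order filtration is $\mathcal D^p(\mathcal O_n)=\{\delta\in\operatorname{End}_k(\mathcal O_n):[f_0,[f_1,\dots,[f_p,\delta]\dots]]=0\ \forall f_i\in\mathcal O_n\}$. For $\delta\in\mathcal D^p(\mathcal O_n)$, $\operatorname{ad}_x^p(\delta)$ is multiplication by an element of $\mathcal O_n$ and $\operatorname{ad}_x^p:\mathcal D^p(\mathcal O_n)\to\mathcal O_n$ is $\mathcal O_n$-linear, so its image is an ideal $(x^{v_p})$ of $\mathcal O_n$; $v_p\in\{0,\dots,n\}$ denotes the corresponding exponent. *)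

(* Defs.v *)
From HB Require Import structures.
From mathcomp Require Import all_boot all_order all_algebra.
Set Implicit Arguments. Unset Strict Implicit. Unset Printing Implicit Defensive.
Import GRing.Theory.
Local Open Scope ring_scope.

(* O_n = k[x]/(x^(n+1)) is identified with k^(n+1) via the basis
   1, x, ..., x^n; End_k(O_n) is then 'M[k]_(n.+1) (acting on column
   vectors, so composition is matrix product). *)

Definition xmul (k : fieldType) (n : nat) : 'M[k]_(n.+1) :=
  \matrix_(i, j) (i == j.+1 :> nat)%:R.

Definition mulop (k : fieldType) (n : nat) (f : {poly k}) : 'M[k]_(n.+1) :=
  horner_mx (xmul k n) f.

Definition commr (k : fieldType) (n : nat) (a d : 'M[k]_(n.+1)) : 'M[k]_(n.+1) :=
  a * d - d * a.

Definition iter_comm (k : fieldType) (n : nat) (fs : seq {poly k})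
    (d : 'M[k]_(n.+1)) : 'M[k]_(n.+1) :=
  foldr (fun f e => @commr k n (@mulop k n f) e) d fs.

Definition in_Dp (k : fieldType) (n p : nat) (d : 'M[k]_(n.+1)) : Prop :=
  forall fs : (p.+1).-tuple {poly k}, @iter_comm k n fs d = 0.

Definition adx (k : fieldType) (n : nat) (d : 'M[k]_(n.+1)) : 'M[k]_(n.+1) :=
  @commr k n (xmul k n) d.

(* "v_p = v": the image ad_x^p(D^p(O_n)) is exactly the ideal (x^v) of O_n,
   i.e. the set of multiplication operators by elements x^v * g. *)
Definition vp_is (k : fieldType) (n p v : nat) : Prop :=
  forall A : 'M[k]_(n.+1),
    (exists2 d, @in_Dp k n p d & iter p (@adx k n) d = A) <->
    (exists g : {poly k}, A = @mulop k n ('X ^+ v * g)).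

(* Main.v *)
Require Import Defs.
From mathcomp Require Import all_boot all_order all_algebra.
From mathcomp Require Import zify ring.
Set Implicit Arguments. Unset Strict Implicit. Unset Printing Implicit Defensive.
Import GRing.Theory.
Local Open Scope ring_scope.

Lemma sum_delta (k : fieldType) (n : nat) (a : 'I_n.+1) (f : 'I_n.+1 -> k) :
  \sum_(r < n.+1) ((r : nat) == a)%:R * f r = f a.
Proof.
rewrite (bigD1 a) //= eqxx mul1r big1 ?addr0 // => r /negbTE ra.
by rewrite -[(r:nat) == a]/(r == a) ra mul0r.
Qed.

Lemma sum_deltaN (k : fieldType) (n : nat) (a : nat) (f : 'I_n.+1 -> k) :
  \sum_(r < n.+1) ((r : nat) == a)%:R * f r = if (a < n.+1)%N then f (inord a) else 0.
Proof.
case: ifP => Ha.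
  rewrite -(sum_delta (inord a)); apply: eq_bigr => r _; by rewrite inordK.
rewrite big1 // => r _; case: eqP => [E|]; last by rewrite mul0r.
by move: (ltn_ord r); rewrite E Ha.
Qed.

Definition ymat (k : fieldType) (n : nat) : 'M[k]_n.+1 :=
  \matrix_(i, j) ((i.+1 == j :> nat)%:R * (j * (n.+1 - j))%:R).
Definition hmat (k : fieldType) (n : nat) : 'M[k]_n.+1 :=
  \matrix_(i, j) ((i == j :> nat)%:R * ((2 * i)%:R - n%:R)).

Lemma xmulM_E (k : fieldType) (n : nat) (M : 'M[k]_n.+1) i j :
  (xmul k n * M) i j = if (i : nat) is i'.+1 then M (inord i') j else 0.
Proof.
rewrite -mulmxE mxE.
rewrite (eq_bigr (fun r : 'I_n.+1 => ((r:nat) == i.-1)%:R * ((0 < i)%N%:R * M r j))); last first.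
  move=> r _; rewrite /xmul /ymat mxE; case: i => [[|i'] Hi] /=; first by rewrite !mul0r mulr0.
  by rewrite mul1r eqSS eq_sym.
rewrite sum_deltaN; case: i => [[|i'] Hi] /=; first by rewrite /= ?mul0r ?if_same.
by rewrite mul1r ltnW.
Qed.

Lemma Mxmul_E (k : fieldType) (n : nat) (M : 'M[k]_n.+1) i j :
  (M * xmul k n) i j = if (j < n)%N then M i (inord j.+1) else 0.
Proof.
rewrite -mulmxE mxE.
rewrite (eq_bigr (fun r : 'I_n.+1 => ((r:nat) == j.+1)%:R * M i r)); last first.
  by move=> r _; rewrite /xmul mxE mulrC.
by rewrite sum_deltaN ltnS.
Qed.

Lemma ymatM_E (k : fieldType) (n : nat) (M : 'M[k]_n.+1) i j :
  (ymat k n * M) i j = if (i < n)%N then (i.+1 * (n - i))%:R * M (inord i.+1) j else 0.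
Proof.
rewrite -mulmxE mxE.
rewrite (eq_bigr (fun r : 'I_n.+1 => ((r:nat) == i.+1)%:R * ((i.+1 * (n - i))%:R * M r j))); last first.
  move=> r _; rewrite /xmul /ymat mxE eq_sym; case: eqP => [->|]; last by rewrite !mul0r.
  by rewrite !mul1r subSS.
by rewrite sum_deltaN ltnS.
Qed.

Lemma Mymat_E (k : fieldType) (n : nat) (M : 'M[k]_n.+1) i j :
  (M * ymat k n) i j = if (j : nat) is j'.+1 then M i (inord j') * (j * (n.+1 - j))%:R else 0.
Proof.
rewrite -mulmxE mxE.
rewrite (eq_bigr (fun r : 'I_n.+1 => ((r:nat) == j.-1)%:R * ((0 < j)%N%:R * (M i r * (j * (n.+1 - j))%:R)))); last first.
  move=> r _; rewrite /ymat mxE; case: j => [[|j'] Hj] /=.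
    by rewrite !mul0r !mulr0.
  by rewrite mul1r eqSS [LHS]mulrCA.
rewrite sum_deltaN; case: j => [[|j'] Hj] /=.
  by rewrite /= ?mul0r ?if_same.
by rewrite mul1r ltnW.
Qed.

Lemma hmatM_E (k : fieldType) (n : nat) (M : 'M[k]_n.+1) i j :
  (hmat k n * M) i j = ((2 * i)%:R - n%:R) * M i j.
Proof.
rewrite -mulmxE mxE -(sum_delta i (fun r => ((2 * r)%:R - n%:R) * M r j)).
by apply: eq_bigr => r _; rewrite /hmat mxE eq_sym; case: eqP => [/val_inj->|]; rewrite ?mul1r ?mul0r.
Qed.

Lemma Mhmat_E (k : fieldType) (n : nat) (M : 'M[k]_n.+1) i j :
  (M * hmat k n) i j = M i j * ((2 * j)%:R - n%:R).
Proof.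
rewrite -mulmxE mxE -(sum_delta j (fun r => M i r * ((2 * r)%:R - n%:R))).
apply: eq_bigr => r _; rewrite /hmat mxE; case: eqP => [/val_inj->|]; rewrite ?mul1r ?mul0r ?mulr0 //.
Qed.

Lemma natr_sub4 (k : fieldType) (a b c d : nat) :
  (a + d = c + b)%N -> a%:R - b%:R = c%:R - d%:R :> k.
Proof.
move=> H; apply: (addIr (b%:R + d%:R)).
have H' : (a%:R + d%:R = c%:R + b%:R :> k) by rewrite -!natrD H.
rewrite [LHS](_ : _ = a%:R + d%:R); last by ring.
by rewrite H'; ring.
Qed.

Lemma mxsubE (k : fieldType) (n : nat) (A B : 'M[k]_n.+1) i j :
  (A - B) i j = A i j - B i j.
Proof. by rewrite !mxE. Qed.

Lemma mxaddE (k : fieldType) (n : nat) (A B : 'M[k]_n.+1) i j :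
  (A + B) i j = A i j + B i j.
Proof. by rewrite !mxE. Qed.

Lemma mxscaleE (k : fieldType) (n : nat) (a : k) (A : 'M[k]_n.+1) i j :
  (a *: A) i j = a * A i j.
Proof. by rewrite !mxE. Qed.

Lemma ymatE (k : fieldType) (n : nat) (a b : 'I_n.+1) :
  ymat k n a b = (a.+1 == b :> nat)%:R * (b * (n.+1 - b))%:R.
Proof. by rewrite /ymat mxE. Qed.

Lemma xmulE (k : fieldType) (n : nat) (a b : 'I_n.+1) :
  xmul k n a b = (a == b.+1 :> nat)%:R.
Proof. by rewrite /xmul mxE. Qed.

Lemma hmatE (k : fieldType) (n : nat) (a b : 'I_n.+1) :
  hmat k n a b = (a == b :> nat)%:R * ((2 * a)%:R - n%:R).
Proof. by rewrite /hmat mxE. Qed.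

Lemma XY_YX (k : fieldType) (n : nat) :
  xmul k n * ymat k n - ymat k n * xmul k n = hmat k n.
Proof.
apply/matrixP => i j; rewrite mxsubE xmulM_E ymatM_E hmatE.
case: i => [[|i'] Hi] /=.
  case: ifP => Hin.
    rewrite xmulE inordK; last exact: Hin.
    case: j => [[|j'] Hj] /=.
      rewrite subn0 mul1n mulr1 mul1r muln0 mulr0n !sub0r; reflexivity.
    rewrite !mulr0 !mul0r subr0; reflexivity.
  move/negbT: Hin; rewrite -leqNgt leqn0 => /eqP Hn0.
  have Hn : n%:R = 0 :> k by rewrite Hn0.
  rewrite Hn muln0 subrr mulr0; reflexivity.
rewrite ymatE inordK; last exact: ltnW.
case: (eqVneq i'.+1 j) => [Ej|Ne].
  rewrite -Ej /= mulr1n !mul1r; case: ifP => Hin.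
    rewrite xmulE inordK; last exact: Hin.
    rewrite -Ej eqxx mulr1; apply: natr_sub4; lia.
  move/negbT: Hin; rewrite -leqNgt => Hin.
  rewrite subr0 -natrB; last lia.
  have Ei : n = i'.+1 by lia.
  by rewrite Ei subSn // subnn muln1 mul2n -addnn addnK.
rewrite /= mulr0n !mul0r; case: ifP => Hin.
  rewrite xmulE inordK; last exact: Hin.
  rewrite eqSS (negbTE Ne) mulr0 subrr; reflexivity.
rewrite subrr; reflexivity.
Qed.

Lemma HX_XH (k : fieldType) (n : nat) :
  hmat k n * xmul k n - xmul k n * hmat k n = (2%:R : k) *: xmul k n.
Proof.
apply/matrixP => i j; rewrite mxsubE hmatM_E Mhmat_E mxscaleE xmulE.
case: (eqVneq (i : nat) j.+1) => [Ei|Ne] /=.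
  rewrite mulr1n mul1r mulr1 mulr1 Ei mulnS natrD; ring.
rewrite mulr0n !mulr0 !mul0r subrr; reflexivity.
Qed.

Lemma mxoppE (k : fieldType) (n : nat) (A : 'M[k]_n.+1) i j :
  (- A) i j = - A i j.
Proof. by rewrite !mxE. Qed.

Lemma HY_YH (k : fieldType) (n : nat) :
  hmat k n * ymat k n - ymat k n * hmat k n = - ((2%:R : k) *: ymat k n).
Proof.
apply/matrixP => i j; rewrite mxsubE hmatM_E Mhmat_E mxoppE mxscaleE ymatE.
case: (eqVneq i.+1 (j : nat)) => [Ei|Ne] /=.
  rewrite mulr1n !mul1r -Ei mulnS natrD; ring.
rewrite mulr0n !mul0r !mulr0 ?oppr0 ?subrr ?addr0; reflexivity.
Qed.

Lemma zmod6 (V : zmodType) (a b c d e f : V) :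
  a - b + d - c + b - f + c - e = a - e + d - f.
Proof.
rewrite -!addrA [-b + _]addrCA [-b + _]addrCA addKr [-c + _]addrCA addKr.
by rewrite [-e + _]addrCA [-e + _]addrC.
Qed.

Lemma commr_jac (k : fieldType) (n : nat) (A B M : 'M[k]_n.+1) :
  commr A (commr B M) - commr B (commr A M) = commr (commr A B) M.
Proof.
rewrite /commr !mulrBr !mulrBl !mulrA !opprB !addrA; exact: zmod6.
Qed.

Lemma commrD (k : fieldType) (n : nat) (A M N : 'M[k]_n.+1) :
  commr A (M + N) = commr A M + commr A N.
Proof. by rewrite /commr mulrDr mulrDl opprD addrACA. Qed.

Lemma commrZ (k : fieldType) (n : nat) (A M : 'M[k]_n.+1) (c : k) :
  commr A (c *: M) = c *: commr A M.
Proof. by rewrite /commr scalerBr scalerAr scalerAl. Qed.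

Lemma commr0 (k : fieldType) (n : nat) (A : 'M[k]_n.+1) : commr A 0 = 0.
Proof. by rewrite /commr mulr0 mul0r subrr. Qed.

Lemma commrZl (k : fieldType) (n : nat) (A M : 'M[k]_n.+1) (c : k) :
  commr (c *: A) M = c *: commr A M.
Proof. by rewrite /commr scalerBr scalerAl scalerAr. Qed.

Lemma commrNl (k : fieldType) (n : nat) (A M : 'M[k]_n.+1) :
  commr (- A) M = - commr A M.
Proof. by rewrite /commr mulNr mulrN opprB opprK addrC. Qed.

Definition Fop (k : fieldType) (n : nat) (M : 'M[k]_n.+1) := commr (ymat k n) M.
Definition Hop (k : fieldType) (n : nat) (M : 'M[k]_n.+1) := commr (hmat k n) M.

Lemma EF_FE (k : fieldType) (n : nat) (M : 'M[k]_n.+1) :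
  adx (Fop M) = Fop (adx M) + Hop M.
Proof.
apply/eqP; rewrite addrC -subr_eq; apply/eqP.
by rewrite /adx /Fop /Hop commr_jac -[commr (xmul k n) (ymat k n)]/(xmul k n * ymat k n - ymat k n * xmul k n) XY_YX.
Qed.

Lemma HE_EH (k : fieldType) (n : nat) (M : 'M[k]_n.+1) :
  Hop (adx M) = adx (Hop M) + 2%:R *: adx M.
Proof.
apply/eqP; rewrite addrC -subr_eq; apply/eqP.
by rewrite /adx /Hop commr_jac -[commr (hmat k n) (xmul k n)]/(hmat k n * xmul k n - xmul k n * hmat k n) HX_XH commrZl.
Qed.

Lemma HF_FH (k : fieldType) (n : nat) (M : 'M[k]_n.+1) :
  Hop (Fop M) = Fop (Hop M) - 2%:R *: Fop M.
Proof.
apply/eqP; rewrite addrC -subr_eq; apply/eqP.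
by rewrite /Fop /Hop commr_jac -[commr (hmat k n) (ymat k n)]/(hmat k n * ymat k n - ymat k n * hmat k n) HY_YH commrNl commrZl.
Qed.

Section Dummy. End Dummy.

Lemma adxZ (k : fieldType) (n : nat) (M : 'M[k]_n.+1) (c : k) : adx (c *: M) = c *: adx M.
Proof. exact: commrZ. Qed.
Lemma adxD (k : fieldType) (n : nat) (M N : 'M[k]_n.+1) : adx (M + N) = adx M + adx N.
Proof. exact: commrD. Qed.
Lemma adx0 (k : fieldType) (n : nat) : adx (0 : 'M[k]_n.+1) = 0.
Proof. exact: commr0. Qed.
Lemma FopZ (k : fieldType) (n : nat) (M : 'M[k]_n.+1) (c : k) : Fop (c *: M) = c *: Fop M.
Proof. exact: commrZ. Qed.
Lemma Fop0 (k : fieldType) (n : nat) : Fop (0 : 'M[k]_n.+1) = 0.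
Proof. exact: commr0. Qed.

Lemma iter_adxZ (k : fieldType) (n : nat) j (M : 'M[k]_n.+1) (c : k) :
  iter j (@adx k n) (c *: M) = c *: iter j (@adx k n) M.
Proof. by elim: j => //= j ->; rewrite adxZ. Qed.
Lemma iter_adx0 (k : fieldType) (n : nat) j : iter j (@adx k n) 0 = 0.
Proof. by elim: j => //= j ->; rewrite adx0. Qed.
Lemma iter_adxD (k : fieldType) (n : nat) j (M N : 'M[k]_n.+1) :
  iter j (@adx k n) (M + N) = iter j (@adx k n) M + iter j (@adx k n) N.
Proof. by elim: j => //= j ->; rewrite adxD. Qed.

Lemma Hop_iterE (k : fieldType) (n : nat) (v : 'M[k]_n.+1) mu j :
  Hop v = mu *: v -> Hop (iter j (@adx k n) v) = (mu + 2%:R * j%:R) *: iter j (@adx k n) v.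
Proof.
move=> Hv; elim: j => [|j IH] /=; first by rewrite mulr0 addr0.
rewrite HE_EH IH adxZ -scalerDl; congr (_ *: _).
rewrite -addn1 natrD; ring.
Qed.

Lemma Hop_iterF (k : fieldType) (n : nat) (v : 'M[k]_n.+1) mu j :
  Hop v = mu *: v -> Hop (iter j (@Fop k n) v) = (mu - 2%:R * j%:R) *: iter j (@Fop k n) v.
Proof.
move=> Hv; elim: j => [|j IH] /=; first by rewrite mulr0 subr0.
rewrite HF_FH IH FopZ -scalerBl; congr (_ *: _).
rewrite -addn1 natrD; ring.
Qed.

Lemma iterE_F (k : fieldType) (n : nat) (v : 'M[k]_n.+1) mu q :
  Hop v = mu *: v ->
  iter q.+1 (@adx k n) (Fop v) =
    Fop (iter q.+1 (@adx k n) v) + ((q.+1)%:R * (mu + q%:R)) *: iter q (@adx k n) v.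
Proof.
move=> Hv; elim: q => [|q IH].
  rewrite /= EF_FE Hv mul1r addr0; reflexivity.
rewrite [in LHS]iterS IH adxD EF_FE (Hop_iterE _ Hv) adxZ -iterS -addrA -scalerDl.
have -> : mu + 2%:R * (q.+1)%:R + (q.+1)%:R * (mu + q%:R) = (q.+2)%:R * (mu + (q.+1)%:R).
  rewrite !mulrS; ring.
reflexivity.
Qed.

Lemma E_iterF (k : fieldType) (n : nat) (v : 'M[k]_n.+1) mu j :
  adx v = 0 -> Hop v = mu *: v ->
  adx (iter j.+1 (@Fop k n) v) = ((j.+1)%:R * (mu - j%:R)) *: iter j (@Fop k n) v.
Proof.
move=> Ev Hv; elim: j => [|j IH].
  rewrite /= EF_FE Ev Fop0 add0r Hv mul1r subr0; reflexivity.
rewrite [in LHS]iterS EF_FE IH FopZ (Hop_iterF _ Hv) -iterS -scalerDl.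
congr (_ *: _).
rewrite !mulrS; ring.
Qed.

Lemma natr_neq0 (k : fieldType) (m : nat) :
  [pchar k] =i pred0 -> (0 < m)%N -> (m%:R : k) != 0.
Proof. by move=> /pcharf0P H Hm; rewrite H -lt0n. Qed.

Lemma EF_lowest (k : fieldType) (n : nat) (v : 'M[k]_n.+1) (N : nat) :
  [pchar k] =i pred0 -> adx v = 0 -> Hop v = N%:R *: v ->
  forall j, (j <= N)%N ->
  exists2 c : k, c != 0 & iter j (@adx k n) (iter j (@Fop k n) v) = c *: v.
Proof.
move=> ch Ev Hv; elim=> [|j IH] HjN.
  exists 1; [exact: oner_neq0 | by rewrite scale1r].
have [c c0 Hc] := IH (ltnW HjN).
exists ((j.+1)%:R * (N%:R - j%:R) * c).
  rewrite mulf_neq0 // mulf_neq0 //; first exact: natr_neq0.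
  by rewrite -natrB ?(ltnW HjN) // natr_neq0 // subn_gt0.
by rewrite iterSr (E_iterF _ Ev Hv) iter_adxZ Hc scalerA.
Qed.

Definition Pdeg (k : fieldType) (n r : nat) (M : 'M[k]_n.+1) : 'M[k]_n.+1 :=
  \matrix_(i, j) (((i + (n - j))%N == r)%:R * M i j).

Lemma PdegE (k : fieldType) (n r : nat) (M : 'M[k]_n.+1) i j :
  Pdeg r M i j = ((i + (n - j))%N == r)%:R * M i j.
Proof. by rewrite /Pdeg mxE. Qed.

Lemma adxE (k : fieldType) (n : nat) (M : 'M[k]_n.+1) i j :
  adx M i j = (if (i : nat) is i'.+1 then M (inord i') j else 0)
              - (if (j < n)%N then M i (inord j.+1) else 0).
Proof. by rewrite /adx /commr mxsubE xmulM_E Mxmul_E. Qed.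

Lemma FopE (k : fieldType) (n : nat) (M : 'M[k]_n.+1) i j :
  Fop M i j = (if (i < n)%N then (i.+1 * (n - i))%:R * M (inord i.+1) j else 0)
              - (if (j : nat) is j'.+1 then M i (inord j') * (j * (n.+1 - j))%:R else 0).
Proof. by rewrite /Fop /commr mxsubE ymatM_E Mymat_E. Qed.

Lemma HopE (k : fieldType) (n : nat) (M : 'M[k]_n.+1) i j :
  Hop M i j = ((2 * i)%:R - n%:R) * M i j - M i j * ((2 * j)%:R - n%:R).
Proof. by rewrite /Hop /commr mxsubE hmatM_E Mhmat_E. Qed.

Lemma P_E (k : fieldType) (n r : nat) (M : 'M[k]_n.+1) :
  Pdeg r.+1 (adx M) = adx (Pdeg r M).
Proof.
apply/matrixP => i j; rewrite PdegE !adxE mulrBr.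
congr (_ - _).
  case: i => [[|i'] Hi] /=; first exact: mulr0.
  rewrite PdegE inordK; last exact: ltnW.
  rewrite addSn eqSS; reflexivity.
case: ifP => Hj; last exact: mulr0.
rewrite PdegE inordK; last by rewrite ltnS.
have -> : (n - j = (n - j.+1).+1)%N by rewrite subnS prednK // subn_gt0.
rewrite addnS eqSS; reflexivity.
Qed.

Lemma P_E0 (k : fieldType) (n : nat) (M : 'M[k]_n.+1) :
  Pdeg 0 (adx M) = 0.
Proof.
apply/matrixP => i j; rewrite PdegE adxE [RHS]mxE.
case: eqP => [H0|_]; last exact: mul0r.
move/eqP: H0; rewrite addn_eq0 subn_eq0 => /andP [/eqP Hi0 Hj].
rewrite Hi0 ltnNge Hj /= subrr mulr0; reflexivity.
Qed.

Lemma P_F (k : fieldType) (n r : nat) (M : 'M[k]_n.+1) :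
  Fop (Pdeg r.+1 M) = Pdeg r (Fop M).
Proof.
apply/matrixP => i j; rewrite PdegE !FopE mulrBr.
congr (_ - _).
  case: ifP => Hi; last exact: (esym (mulr0 _)).
  rewrite PdegE inordK; last by rewrite ltnS.
  rewrite addSn eqSS mulrCA; reflexivity.
case: j => [[|j'] Hj] /=; first exact: (esym (mulr0 _)).
rewrite PdegE inordK; last exact: ltnW.
have -> : (n - j' = (n - j'.+1).+1)%N by rewrite subnS prednK // subn_gt0 -ltnS.
rewrite addnS eqSS mulrA; reflexivity.
Qed.

Lemma P_F0 (k : fieldType) (n : nat) (M : 'M[k]_n.+1) :
  Fop (Pdeg 0 M) = 0.
Proof.
apply/matrixP => i j; rewrite FopE [RHS]mxE.
have -> : (if (i < n)%N then (i.+1 * (n - i))%:R * Pdeg 0 M (inord i.+1) j else 0) = 0.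
  case: ifP => Hi; last reflexivity.
  rewrite PdegE inordK; last by rewrite ltnS.
  rewrite addSn /= mul0r mulr0; reflexivity.
case: j => [[|j'] Hj] /=; first by rewrite subrr.
rewrite PdegE inordK; last exact: ltnW.
have -> : (n - j' = (n - j'.+1).+1)%N by rewrite subnS prednK // subn_gt0 -ltnS.
rewrite addnS /= mul0r mul0r subrr; reflexivity.
Qed.

Lemma P_H (k : fieldType) (n r : nat) (M : 'M[k]_n.+1) :
  Hop (Pdeg r M) = ((2 * r)%:R - (2 * n)%:R) *: Pdeg r M.
Proof.
apply/matrixP => i j; rewrite HopE mxscaleE !PdegE.
case: eqP => [Er|_] /=.
  rewrite mulr1n !mul1r -Er !natrM natrD natrB; last by rewrite -ltnS.
  ring.
rewrite mulr0n !mul0r !mulr0 subrr; reflexivity.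
Qed.

Lemma PP (k : fieldType) (n r : nat) (M : 'M[k]_n.+1) :
  Pdeg r (Pdeg r M) = Pdeg r M.
Proof.
apply/matrixP => i j; rewrite !PdegE mulrA -natrM mulnb andbb; reflexivity.
Qed.

Lemma iter_P (k : fieldType) (n : nat) (M : 'M[k]_n.+1) p s :
  Pdeg s (iter p (@adx k n) M) =
  if (p <= s)%N then iter p (@adx k n) (Pdeg (s - p) M) else 0.
Proof.
elim: p s => [|p IH] s; first by rewrite subn0.
case: s => [|s]; first by rewrite iterS P_E0.
rewrite iterS P_E IH ltnS subSS; case: ifP => //= _; exact: adx0.
Qed.

Lemma lowest_inj (k : fieldType) (n : nat) (v : 'M[k]_n.+1) (r : nat) :
  [pchar k] =i pred0 -> Fop v = 0 -> Hop v = ((2 * r)%:R - (2 * n)%:R) *: v ->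
  forall q, iter q (@adx k n) v = 0 -> (q + 2 * r <= 2 * n)%N -> v = 0.
Proof.
move=> ch Fv0 Hmu; elim=> [|q IHq] Eq Hq; first exact: Eq.
apply: IHq; last by lia.
have := @iterE_F _ _ v _ q Hmu.
rewrite Fv0 iter_adx0 Eq Fop0 add0r => /esym /eqP; rewrite scaler_eq0 => /orP [Hc|/eqP //].
exfalso; move: Hc; apply/negP; rewrite mulf_neq0 //; first exact: natr_neq0.
rewrite addrAC -natrD -opprB -natrB; last by lia.
by rewrite oppr_eq0 natr_neq0 //; lia.
Qed.

Lemma weight (k : fieldType) (n : nat) (r : nat) :
  [pchar k] =i pred0 -> forall (v : 'M[k]_n.+1) q,
  Pdeg r v = v -> iter q (@adx k n) v = 0 -> (q + 2 * r <= 2 * n)%N -> v = 0.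
Proof.
move=> ch; elim: r => [|r IH] v q Pv Eq Hq.
  have Hmu : Hop v = ((2 * 0)%:R - (2 * n)%:R) *: v by rewrite -[in LHS]Pv P_H Pv.
  apply: (lowest_inj ch _ Hmu Eq Hq); by rewrite -Pv P_F0.
have Hmu : Hop v = ((2 * r.+1)%:R - (2 * n)%:R) *: v by rewrite -[in LHS]Pv P_H Pv.
apply: (lowest_inj ch _ Hmu Eq Hq).
apply: (IH (Fop v) q.+1).
- by rewrite -P_F Pv.
- by rewrite (@iterE_F _ _ v _ q Hmu) iterS Eq adx0 Fop0 scaler0 addr0.
- by lia.
Qed.

Lemma mulop_simpl (k : fieldType) (n : nat) (p : {poly k}) (c : k) :
  @mulop k n (p * 'X + c%:P) = @mulop k n p * xmul k n + c%:M.
Proof. by rewrite /mulop rmorphD rmorphM /= horner_mx_X horner_mx_C. Qed.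

Lemma mulopE (k : fieldType) (n : nat) (f : {poly k}) (i j : 'I_n.+1) :
  @mulop k n f i j = (j <= i)%N%:R * f`_(i - j).
Proof.
elim/poly_ind: f i j => [|p c IH] i j.
  rewrite /mulop rmorph0 mxE coef0 mulr0; reflexivity.
rewrite mulop_simpl mxaddE Mxmul_E mxE coefD coefMX coefC.
have -> : (if (j < n)%N then mulop n p i (inord j.+1) else 0) = (j.+1 <= i)%N%:R * p`_(i - j.+1).
  case: ifP => Hjn.
    rewrite IH inordK; last by rewrite ltnS.
    reflexivity.
  have E : (j.+1 <= i)%N = false.
    apply/negbTE; rewrite -ltnNge ltnS; apply: leq_trans (leq_ord i) _.
    by rewrite leqNgt Hjn.
  rewrite E /= mulr0n mul0r; reflexivity.
case: (ltngtP i j) => H.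
- have E3 : (i == j) = false by apply/eqP => E; rewrite E ltnn in H.
  rewrite E3 /= !mulr0n !mul0r add0r; reflexivity.
- have E3 : (i == j) = false by apply/eqP => E; rewrite E ltnn in H.
  have E4 : (i - j == 0)%N = false by apply/negbTE; rewrite -lt0n subn_gt0.
  rewrite E3 E4 /= !mulr1n !mul1r mulr0n !addr0 subnS; reflexivity.
- have E3 : (i == j) by apply/eqP/val_inj.
  rewrite E3 H subnn /= mulr1n !mul1r mul0r add0r.
  reflexivity.
Qed.

Lemma toep (k : fieldType) (n : nat) (A : 'M[k]_n.+1) :
  adx A = 0 -> forall i j : 'I_n.+1, A i j = (j <= i)%N%:R * A (inord (i - j)) ord0.
Proof.
move=> EA.
have C : forall i j : 'I_n.+1, (if (i : nat) is i'.+1 then A (inord i') j else 0)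
                   = (if (j < n)%N then A i (inord j.+1) else 0).
  move=> i j; apply/eqP; rewrite -subr_eq0 -adxE EA mxE; exact: eqxx.
suff S : forall m (j : 'I_n.+1), (j : nat) = m -> forall i : 'I_n.+1,
    A i j = (j <= i)%N%:R * A (inord (i - j)) ord0.
  by move=> i j; apply: S.
elim=> [|m IHm] j Ej i.
  have -> : j = ord0 by apply/val_inj.
  rewrite /= subn0 inord_val mulr1n mul1r; reflexivity.
have Hm : (m < n)%N by rewrite -ltnS -Ej.
have Ej' : (inord m.+1 : 'I_n.+1) = j by apply/val_inj; rewrite /= inordK // -Ej.
have := C i (inord m); rewrite inordK; last exact: ltnW.
rewrite Hm Ej' => <-.
case: i => [[|i'] Hi] /=.
  rewrite Ej /= mulr0n mul0r; reflexivity.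
rewrite (IHm (inord m)); last by rewrite inordK // ltnW.
rewrite !inordK; last exact: ltnW.
  rewrite Ej subSS ltnS; reflexivity.
by rewrite ltnW.
Qed.

Lemma adx_mulL (k : fieldType) (n : nat) (G M : 'M[k]_n.+1) :
  G * xmul k n = xmul k n * G -> adx (G * M) = G * adx M.
Proof.
move=> HG; rewrite /adx /commr mulrA -HG -!mulrA mulrBr; reflexivity.
Qed.

Lemma iter_mulL (k : fieldType) (n : nat) (G M : 'M[k]_n.+1) m :
  G * xmul k n = xmul k n * G -> iter m (@adx k n) (G * M) = G * iter m (@adx k n) M.
Proof. by move=> HG; elim: m => //= m ->; rewrite adx_mulL. Qed.

Lemma adx_mulR (k : fieldType) (n : nat) (M : 'M[k]_n.+1) :
  adx (M * xmul k n) = adx M * xmul k n.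
Proof. rewrite /adx /commr mulrBl !mulrA; reflexivity. Qed.

Lemma iter_mulR (k : fieldType) (n : nat) (M : 'M[k]_n.+1) m :
  iter m (@adx k n) (M * xmul k n) = iter m (@adx k n) M * xmul k n.
Proof. by elim: m => //= m ->; rewrite adx_mulR. Qed.

Lemma mulop_commX (k : fieldType) (n : nat) (g : {poly k}) :
  @mulop k n g * xmul k n = xmul k n * @mulop k n g.
Proof.
have := comm_horner_mx2 (xmul k n) g 'X; rewrite horner_mx_X; exact.
Qed.

Lemma commr_mulop_step (k : fieldType) (n : nat) (f : {poly k}) (M : 'M[k]_n.+1) m :
  iter m.+1 (@adx k n) M = 0 -> iter m (@adx k n) (commr (@mulop k n f) M) = 0.
Proof.
move=> HM; elim/poly_ind: f => [|p c IH].
  rewrite /mulop rmorph0 /commr mul0r mulr0 subrr; exact: iter_adx0.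
rewrite mulop_simpl.
have -> : commr (@mulop k n p * xmul k n + c%:M) M
        = @mulop k n p * adx M + commr (@mulop k n p) M * xmul k n.
  have Hc : c%:M * M = M * c%:M by rewrite -!mulmxE scalar_mxC.
  rewrite /commr /adx /commr mulrDl mulrDr Hc.
  rewrite mulrBr mulrBl !mulrA opprD addrACA subrr addr0.
  rewrite addrA addrNK; reflexivity.
rewrite iter_adxD iter_mulL ?mulop_commX // iter_mulR IH -iterSr HM mulr0 mul0r addr0.
reflexivity.
Qed.

Lemma iter_comm_vanish (k : fieldType) (n : nat) (fs : seq {poly k}) :
  forall (M : 'M[k]_n.+1) q, iter (q + size fs) (@adx k n) M = 0 ->
  iter q (@adx k n) (iter_comm fs M) = 0.
Proof.
elim: fs => [|f fs IH] M q H; first by rewrite addn0 in H.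
rewrite /= commr_mulop_step //; apply: IH; by rewrite addSnnS.
Qed.

Lemma iter_comm_nseq (k : fieldType) (n : nat) (d : 'M[k]_n.+1) m :
  iter_comm (nseq m 'X) d = iter m (@adx k n) d.
Proof. by elim: m => //= m ->; rewrite /mulop horner_mx_X. Qed.

Lemma inDp_iff (k : fieldType) (n p : nat) (d : 'M[k]_n.+1) :
  in_Dp p d <-> iter p.+1 (@adx k n) d = 0.
Proof.
split.
  move=> H; rewrite -iter_comm_nseq; exact: (H (Tuple (nseq_tupleP p.+1 'X))).
move=> H fs; have := @iter_comm_vanish k n fs d 0; rewrite size_tuple add0n; exact.
Qed.

Lemma adx_Xl (k : fieldType) (n : nat) l : adx (xmul k n ^+ l) = 0.
Proof. by rewrite /adx /commr -exprS -exprSr subrr. Qed.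

Lemma commr_mul (k : fieldType) (n : nat) (A B C : 'M[k]_n.+1) :
  commr A (B * C) = commr A B * C + B * commr A C.
Proof. rewrite /commr mulrBl mulrBr !mulrA addrA subrK; reflexivity. Qed.

Lemma Hop_Xl (k : fieldType) (n : nat) l :
  Hop (xmul k n ^+ l) = (2 * l)%:R *: xmul k n ^+ l.
Proof.
elim: l => [|l IH].
  rewrite /Hop /commr expr0 mulr1 mul1r subrr muln0 mulr0n scale0r; reflexivity.
rewrite exprSr [Hop _]/Hop commr_mul -[commr (hmat k n) (xmul k n ^+ l)]/(Hop _) IH.
rewrite -[commr (hmat k n) (xmul k n)]/(hmat k n * xmul k n - xmul k n * hmat k n) HX_XH.
rewrite -scalerAl -scalerAr -scalerDl mulnS natrD addrC; reflexivity.
Qed.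

Lemma Pdeg0 (k : fieldType) (n r : nat) : Pdeg r (0 : 'M[k]_n.+1) = 0.
Proof. apply/matrixP => i j; rewrite PdegE !mxE mulr0; reflexivity. Qed.

Lemma vp_main (k : fieldType) (n l p : nat) :
  [pchar k] =i pred0 -> (2 * l - 1 <= p <= 2 * l)%N -> (0 < l)%N -> vp_is k n p l.
Proof.
move=> ch /andP [Hp1 Hp2] Hl A; split.
  case=> d /inDp_iff Hd <-.
  set B := iter p (@adx k n) d.
  have EB : adx B = 0 by rewrite /B -iterS.
  have Z : forall m, (m < l)%N -> (m < n.+1)%N -> B (inord m) ord0 = 0.
    move=> m Hml Hmn.
    have : Pdeg (m + n) B (inord m) ord0 = B (inord m) ord0.
      rewrite PdegE inordK; last exact: Hmn.
      rewrite subn0 eqxx mul1r; reflexivity.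
    rewrite /B iter_P; case: ifP => Hp.
      have Hv : iter p.+1 (@adx k n) (Pdeg (m + n - p) d) = 0.
        have := iter_P d p.+1 (m + n).+1; rewrite Hd Pdeg0 ltnS Hp subSS; exact: esym.
      have v0 : Pdeg (m + n - p) d = 0.
        apply: (weight ch (PP _ _) Hv); lia.
      move=> <-; rewrite v0 iter_adx0 mxE; reflexivity.
    move=> <-; rewrite mxE; reflexivity.
  exists (\poly_(i < n.+1) B (inord (i + l)) ord0).
  apply/matrixP => i j; rewrite mulopE coefXnM coef_poly (toep EB).
  case: (leqP j i) => Hji; last by rewrite /= mulr0n !mul0r.
  case: ltnP => Hil.
    rewrite Z //; last by rewrite ltnS; apply: leq_trans (leq_subr _ _) _; rewrite -ltnS.
  have -> : (i - j - l < n.+1)%N by apply: leq_ltn_trans (leq_subr _ _) _; apply: leq_ltn_trans (leq_subr _ _) _.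
  rewrite subnK //; reflexivity.
case=> g ->.
set v := xmul k n ^+ l.
have Ev : adx v = 0 by exact: adx_Xl.
have Hv : Hop v = (2 * l)%:R *: v by exact: Hop_Xl.
have [c c0 Hc] := EF_lowest ch Ev Hv (leqnn (2 * l)).
set d0 := c^-1 *: iter (2 * l) (@Fop k n) v.
have D0 : iter (2 * l) (@adx k n) d0 = v by rewrite iter_adxZ Hc scalerA mulVf // scale1r.
exists (@mulop k n g * iter (2 * l - p) (@adx k n) d0).
  apply/inDp_iff; rewrite iter_mulL ?mulop_commX // -iterD.
  have -> : (p.+1 + (2 * l - p) = (2 * l).+1)%N by lia.
  by rewrite iterS D0 Ev mulr0.
rewrite iter_mulL ?mulop_commX // -iterD.
have -> : (p + (2 * l - p) = 2 * l)%N by lia.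
rewrite D0 mulrC /mulop rmorphM rmorphXn /= horner_mx_X; reflexivity.
Qed.

Theorem lemma7 (k : fieldType) (n : nat) :
  [pchar k] =i pred0 -> (0 < n)%N ->
  forall l : nat, (1 <= l <= n)%N ->
    vp_is k n (2 * l - 1) l /\ vp_is k n (2 * l) l.
Proof.
move=> ch _ l /andP [Hl _]; split; apply: vp_main => //; apply/andP; split; lia.
Qed.
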